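(* Let $F'\in\mathcal I$ and suppose $\sum_{u\in F'}f(u)+\sum_{v\in P}w'(v)d(v,F')^p\le z'$. Then $\sum_{u\in F'}f(u)+\sum_{v\in P}w(v)d(v,F')^p\le 4\cdot16^{p-1}z^*+\left(\tfrac87\right)^{p-1}z'$, where $z^*$ is the optimal value of $\textsc{FacilityMatLP}(w,\mathcal M)$.
   Context: Setting: $p\ge1$; a finite metric $d$ on $P\cup\mathcal F$; $f:\mathcal F\to\mathbb{R}_{\ge0}$; $w:P\to\mathbb{R}_{\ge0}$; matroid $\mathcal M=(\mathcal F,\mathcal I)$ with rank $r$. $\textsc{FacilityMatLP}(w,\mathcal M)$: minimize $\sum_u f(u)y_u+\sum_{v,u}w(v)d(v,u)^px_{vu}$ s.t. $\sum_u x_{vu}\ge1$, $\sum_{u\in S}y_u\le r(S)$ for all $S\subseteq\mathcal F$, $0\le x_{vu}\le y_u$. Let $(x,y)$ be an optimal solution (value $z^*$) with $\sum_u x_{vu}=1$ for all $v$, and $\mathcal R(v):=(\sum_u d(v,u)^px_{vu})^{1/p}$. $w'$ is obtained by client consolidation: order clients so that $\mathcal R(v_1)\le\dots\le\mathcal R(v_n)$; set $w':=w$; for $i=1,\dots,n-1$ and $j=i+1,\dots,n$: if $d(v_i,v_j)\le2^{(p+1)/p}\mathcal R(v_j)$ and $w'(v_i)>0$, set $w'(v_i)\leftarrow w'(v_i)+w'(v_j)$, $w'(v_j)\leftarrow0$. *)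

(* Defs.v *)
From HB Require Import structures.
From mathcomp Require Import all_boot all_order all_algebra.
From mathcomp Require Import reals exp.
Set Implicit Arguments. Unset Strict Implicit. Unset Printing Implicit Defensive.
Import Order.TTheory GRing.Theory Num.Theory.
Local Open Scope ring_scope.

Section Defs.
Variables (R : realType) (V : finType).

Definition is_metric_on (X : {set V}) (d : V -> V -> R) : Prop :=
  (forall a b, a \in X -> b \in X -> 0 <= d a b) /\
  (forall a b, a \in X -> b \in X -> (d a b = 0 <-> a = b)) /\
  (forall a b, a \in X -> b \in X -> d a b = d b a) /\
  (forall a b c, a \in X -> b \in X -> c \in X -> d a c <= d a b + d b c).

Definition is_matroid (Fs : {set V}) (indep : {set V} -> bool) : Prop :=
  (forall A : {set V}, indep A -> A \subset Fs) /\
  indep set0 /\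
  (forall A B : {set V}, A \subset B -> indep B -> indep A) /\
  (forall A B : {set V}, indep A -> indep B -> #|A| < #|B| ->
     exists2 e, e \in B :\: A & indep (e |: A))%N.

Definition mrank (indep : {set V} -> bool) (S : {set V}) : nat :=
  (\max_(A : {set V} | (A \subset S) && indep A) #|A|)%N.

Definition lp_obj (p : R) (d : V -> V -> R) (f w : V -> R) (Fs P : {set V})
    (x : V -> V -> R) (y : V -> R) : R :=
  \sum_(u in Fs) f u * y u +
  \sum_(v in P) \sum_(u in Fs) w v * (d v u) `^ p * x v u.

Definition lp_feasible (indep : {set V} -> bool) (Fs P : {set V})
    (x : V -> V -> R) (y : V -> R) : Prop :=
  (forall v, v \in P -> 1 <= \sum_(u in Fs) x v u) /\
  (forall S : {set V}, S \subset Fs -> \sum_(u in S) y u <= (mrank indep S)%:R) /\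
  (forall v u, v \in P -> u \in Fs -> 0 <= x v u /\ x v u <= y u).

Definition Rad (p : R) (d : V -> V -> R) (Fs : {set V}) (x : V -> V -> R)
    (v : V) : R :=
  (\sum_(u in Fs) (d v u) `^ p * x v u) `^ (p^-1).

Definition consol_step (p : R) (d : V -> V -> R) (Rv : V -> R)
    (w : V -> R) (a b : V) : V -> R :=
  if (d a b <= 2 `^ ((p + 1) / p) * Rv b) && (0 < w a) then
    (fun v => if v == a then w a + w b else if v == b then 0 else w v)
  else w.

(* client consolidation along the ordered list s = [v_1; ...; v_n]:
   for i = 1..n-1, for j = i+1..n, apply the step to (v_i, v_j) *)
Fixpoint consolidate (p : R) (d : V -> V -> R) (Rv : V -> R)
    (s : seq V) (w : V -> R) : V -> R :=
  match s with
  | [::] => w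
  | a :: t => consolidate p d Rv t (foldl (fun w' b => consol_step p d Rv w' a b) w t)
  end.

(* d(v, A) = min_{u in A} d(v,u) (used only for nonempty A) *)
Definition distS (d : V -> V -> R) (v : V) (A : {set V}) : R :=
  if [pick u in A] is Some u0 then \big[Order.min/d v u0]_(u in A) d v u else 0.

End Defs.

(* Main.v *)
Require Import Defs.
From HB Require Import structures.
From mathcomp Require Import all_boot all_order all_algebra.
From mathcomp Require Import reals exp.
From mathcomp Require Import interval_inference.
From mathcomp Require convex hoelder classical_sets.
From mathcomp Require Import lra ring.
Import Order.TTheory GRing.Theory Num.Theory.
Local Open Scope ring_scope.

Lemma pow_split (R : realType) (p a b : R) : 1 <= p -> 0 <= a -> 0 <= b ->
  (a + b) `^ p <= (8/7) `^ (p - 1) * a `^ p + 8 `^ (p - 1) * b `^ p.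
Proof.
move=> p1 a0 b0.
have p0 : 0 < p by rewrite (lt_le_trans _ p1).
have t0 : (0:R) <= 7/8 by lra.
have t1 : (7/8:R) <= 1 by lra.
have E : a + b = 7/8 * (8/7 * a) + (1 - 7/8) * (8 * b) by field.
have H := @hoelder.convex_powR R p p1 (Itv01 t0 t1) (8/7*a) (8*b).
rewrite E; apply: le_trans.
  apply: H; rewrite ?classical_sets.inE /= ?in_itv /= ?andbT; by rewrite mulr_ge0.
rewrite convex.convRE /= (@powRM _ (8/7) a) ?(@powRM _ 8 b) //; try lra.
rewrite /unstable.onem.
have e1 : (8/7:R) `^ p = (8/7) `^ (p-1) * (8/7).
  have hx : ((p-1) + 1 == 0) ==> ((8/7:R) != 0) by apply/implyP=>_; lra.
  by rewrite -[in LHS](subrK 1 p) (powRD hx) powRr1 //; lra.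
have e2 : (8:R) `^ p = 8 `^ (p-1) * 8.
  have hx : ((p-1) + 1 == 0) ==> ((8:R) != 0) by apply/implyP=>_; lra.
  by rewrite -[in LHS](subrK 1 p) (powRD hx) powRr1 //; lra.
rewrite e1 e2.
have -> : (7/8 * ((8/7) `^ (p - 1) * (8/7) * a `^ p) : R) = (8/7) `^ (p - 1) * a `^ p by field.
by have -> : ((1 - 7/8) * (8 `^ (p - 1) * 8 * b `^ p) : R) = 8 `^ (p - 1) * b `^ p by field.
Qed.

Section Aux.
Variables (R : realType) (V : finType).
Implicit Types (d : V -> V -> R) (A : {set V}).

Lemma distS_le d v A u : u \in A -> distS d v A <= d v u.
Proof.
move=> uA; rewrite /distS; case: pickP => [u0 _|/(_ u)]; last by rewrite uA.
exact: bigmin_le_cond.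
Qed.

Lemma distS_att d v A : A != set0 -> exists2 u, u \in A & distS d v A = d v u.
Proof.
move=> /set0Pn [u1 u1A]; rewrite /distS; case: pickP => [u0 u0A|/(_ u1)]; last by rewrite u1A.
apply: (big_ind (fun m => exists2 u, u \in A & m = d v u)).
- by exists u0.
- move=> m1 m2 [a1 h1 ->] [a2 h2 ->]; rewrite /Order.min.
  by case: ifP => _; [exists a1|exists a2].
- by move=> i iA; exists i.
Qed.

Lemma pow_2 (p : R) : 1 <= p -> 8 `^ (p - 1) * (2 `^ ((p + 1) / p)) `^ p = 4 * 16 `^ (p - 1).
Proof.
move=> p1; have p0 : p != 0 by apply/eqP; lra.
rewrite -powRrM mulrVK ?unitfE //.
have hx : ((p-1) + 2 == 0) ==> ((2:R) != 0) by apply/implyP=>_; lra.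
have -> : p + 1 = (p - 1) + 2 by ring.
rewrite (powRD hx) (powR_mulrn 2) //.
have -> : (16:R) = 8 * 2 by lra.
rewrite powRM //; ring.
Qed.


End Aux.

Section Main.
Variables (R : realType) (V : finType) (p : R) (P Fs F' : {set V}) (d : V -> V -> R)
  (w : V -> R) (Rv : V -> R).
Hypothesis p1 : 1 <= p.
Hypothesis dm : is_metric_on (P :|: Fs) d.
Hypothesis F'Fs : F' \subset Fs.
Hypothesis F'n0 : F' != set0.
Hypothesis Rv0 : forall v, 0 <= Rv v.
Hypothesis w0 : forall v, v \in P -> 0 <= w v.

Let D v := distS d v F'.
Let al : R := (8/7) `^ (p - 1).
Let C : R := 4 * 16 `^ (p - 1).

Lemma inPF v : v \in P -> v \in P :|: Fs.
Proof. by move=> vP; rewrite inE vP. Qed.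
Lemma inFF u : u \in F' -> u \in P :|: Fs.
Proof. by move=> uF; rewrite inE (subsetP F'Fs u uF) orbT. Qed.

Lemma D_ge0 v : v \in P -> 0 <= D v.
Proof.
move=> vP; rewrite /D; have [u uF ->] := @distS_att _ _ d v F' F'n0.
by case: dm => h _; apply: h; [apply: inPF|apply: inFF].
Qed.

Lemma keyD a b : a \in P -> b \in P -> d a b <= 2 `^ ((p + 1) / p) * Rv b ->
  D b `^ p <= al * D a `^ p + C * Rv b `^ p.
Proof.
move=> aP bP hab.
case: dm => dge0 [_ [dsym dtri]].
have [u uF Du] := @distS_att _ _ d a F' F'n0.
have Db : D b <= D a + 2 `^ ((p + 1) / p) * Rv b.
  apply: (le_trans (@distS_le _ _ d b _ _ uF)).
  have T1 := dtri b a u (inPF b bP) (inPF a aP) (inFF u uF). apply: (le_trans T1).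
  rewrite (dsym b a (inPF b bP) (inPF a aP)) /D Du addrC lerD2l; exact: hab.
apply: le_trans.
  apply: (ge0_ler_powR (ltW (lt_le_trans ltr01 p1))) Db.
  - by rewrite nnegrE D_ge0.
  - by rewrite nnegrE addr_ge0 ?D_ge0 // mulr_ge0 // powR_ge0.
apply: le_trans; first apply: pow_split => //.
- exact: D_ge0.
- by rewrite mulr_ge0 // powR_ge0.
rewrite lerD2l powRM ?powR_ge0 // mulrA pow_2 //.
Qed.


Definition J (L : seq V) (W : V -> R) : Prop :=
  exists U M : V -> R, (forall v, W v = U v + M v) /\
    (forall v, v \in P -> 0 <= U v /\ 0 <= M v) /\ (forall v, v \in L -> M v = 0) /\
    \sum_(v in P) w v * D v `^ p <=
      \sum_(v in P) (U v + al * M v) * D v `^ p + C * \sum_(v in P) (w v - U v) * Rv v `^ p.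

Lemma sum_upd2 (a b : V) (g g' : V -> R) : a \in P -> b \in P -> a != b ->
  (forall v, v != a -> v != b -> g' v = g v) ->
  \sum_(v in P) g' v = \sum_(v in P) g v + (g' a - g a) + (g' b - g b).
Proof.
move=> aP bP ab hg.
rewrite (bigD1 a) //= (bigD1 b) /=; last by rewrite bP eq_sym.
rewrite [in RHS](bigD1 a) //= [in RHS](bigD1 b) /=; last by rewrite bP eq_sym.
rewrite (eq_bigr g); last by move=> v /andP [/andP [_ h1] h2]; apply: hg.
ring.
Qed.

Lemma step_J L W a b : J L W -> a \in P -> b \in P -> b \in L -> a \notin L ->
  J L (consol_step p d Rv W a b).
Proof.
move=> [U [M [hW [h0 [hL hI]]]]] aP bP bL aL.
have ab : a != b by apply/eqP => eab; move: aL; rewrite eab bL.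
rewrite /consol_step; case: ifP => [/andP [hab _]|_]; last by exists U, M.
exists (fun v => if v == b then 0 else U v), (fun v => if v == a then M a + U b else M v).
split; [|split; [|split]].
- move=> v /=; case: (eqVneq v a) => [->|va]; first by rewrite (negbTE ab) hW hW (hL b bL); ring.
  case: (eqVneq v b) => [->|vb]; first by rewrite (hL b bL) add0r.
  exact: hW.
- move=> v vP; have [u0 m0] := h0 v vP; have [ub0 _] := h0 b bP.
  have [_ ma0] := h0 a aP.
  by split; case: ifP => _ //; rewrite addr_ge0.
- by move=> v vL; case: (eqVneq v a) => [eva|]; [move: aL; rewrite -eva vL|move=> _; exact: hL].
- apply: (le_trans hI).
  rewrite (@sum_upd2 a b (fun v => (U v + al * M v) * D v `^ p)
    (fun v => ((if v == b then 0 else U v) + al * (if v == a then M a + U b else M v)) * D v `^ p)) //; last first.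
    by move=> v /negbTE -> /negbTE ->.
  rewrite (@sum_upd2 a b (fun v => (w v - U v) * Rv v `^ p)
    (fun v => (w v - (if v == b then 0 else U v)) * Rv v `^ p)) //; last first.
    by move=> v _ /negbTE ->.
  rewrite !eqxx (negbTE ab) eq_sym (negbTE ab) (hL b bL).
  have K := keyD a b aP bP hab.
  have [ub0 _] := h0 b bP.
  have K2 := ler_wpM2l ub0 K.
  set S1 := \sum_(v in P) _; set S2 := \sum_(v in P) _.
  set Da := D a `^ p in K K2 *; set Db := D b `^ p in K K2 *; set Rb := Rv b `^ p in K K2 *.
  rewrite mulrDr in K2.
  lra.
Qed.


Lemma fold_J L a t W : J L W -> a \in P -> a \notin L -> {subset t <= L} -> {subset t <= P} ->
  J L (foldl (fun w' b => consol_step p d Rv w' a b) W t).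
Proof.
move=> + aP aL; elim: t W => [|b t IH] W //= hJ tL tP.
apply: IH.
- apply: step_J => //; [exact: tP (mem_head _ _)|exact: tL (mem_head _ _)].
- by move=> v vt; apply: tL; rewrite inE vt orbT.
- by move=> v vt; apply: tP; rewrite inE vt orbT.
Qed.

Lemma cons_J s W : uniq s -> {subset s <= P} -> J s W -> J [::] (consolidate p d Rv s W).
Proof.
elim: s W => [|a t IH] W //= /andP [aT ut] sP hJ.
apply: IH => //.
- by move=> v vt; apply: sP; rewrite inE vt orbT.
apply: fold_J => //.
- case: hJ => U [M [h1 [h2 [h3 h4]]]]; exists U, M; split=> //; split=> //; split=> //.
  by move=> v vt; apply: h3; rewrite inE vt orbT.
- exact: sP (mem_head _ _).
- by move=> v vt; apply: sP; rewrite inE vt orbT.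
Qed.

Lemma init_J s : J s w.
Proof.
exists w, (fun _ => 0); split; [|split; [|split]].
- by move=> v; rewrite addr0.
- move=> v vP; split; last by [].
  exact: w0.
- by [].
- under [X in _ <= _ + C * X]eq_bigr do rewrite subrr mul0r.
  rewrite big1_eq !mulr0 addr0; under [X in _ <= X]eq_bigr do rewrite addr0; exact: lexx.
Qed.


Lemma al_ge1 : 1 <= al.
Proof.
rewrite /al; have h : (1:R) <= 8/7 by lra.
have H := @ler_powR R (8/7) h 0 (p-1); rewrite powRr0 in H; apply: H; by rewrite subr_ge0.
Qed.

Lemma C_ge0 : 0 <= C.
Proof. by rewrite /C mulr_ge0 // powR_ge0. Qed.

Lemma final_J W : J [::] W ->
  \sum_(v in P) w v * D v `^ p <= al * \sum_(v in P) W v * D v `^ p + C * \sum_(v in P) w v * Rv v `^ p.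
Proof.
move=> [U [M [hW [h0 [_ hI]]]]]; apply: (le_trans hI).
have a1 := al_ge1.
apply: lerD.
- rewrite mulr_sumr; apply: ler_sum => v vP.
  have [u0 m0] := h0 v vP; have dp := powR_ge0 (D v) p.
  have a1' : 0 <= al - 1 by rewrite subr_ge0.
  have := mulr_ge0 (mulr_ge0 a1' u0) dp.
  rewrite hW; nra.
- apply: ler_wpM2l; first exact: C_ge0.
  apply: ler_sum => v vP.
  have [u0 m0] := h0 v vP; have dp := powR_ge0 (Rv v) p.
  nra.
Qed.

End Main.

Theorem mainTheorem10 (R : realType) (V : finType) (p : R)
    (P Fs : {set V}) (d : V -> V -> R) (f w : V -> R)
    (indep : {set V} -> bool) (x : V -> V -> R) (y : V -> R)
    (s : seq V) (F' : {set V}) (z' : R) :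
  1 <= p ->
  is_metric_on (P :|: Fs) d ->
  (forall u, u \in Fs -> 0 <= f u) ->
  (forall v, v \in P -> 0 <= w v) ->
  is_matroid Fs indep ->
  (* (x, y) is an optimal solution of FacilityMatLP(w, M) *)
  lp_feasible indep Fs P x y ->
  (forall x' y', lp_feasible indep Fs P x' y' ->
     lp_obj p d f w Fs P x y <= lp_obj p d f w Fs P x' y') ->
  (forall v, v \in P -> \sum_(u in Fs) x v u = 1) ->
  (* s orders the clients by nondecreasing R(v) *)
  uniq s -> s =i P ->
  sorted (fun a b => Rad p d Fs x a <= Rad p d Fs x b) s ->
  indep F' -> F' != set0 ->
  \sum_(u in F') f u +
    \sum_(v in P) consolidate p d (Rad p d Fs x) s w v * (distS d v F') `^ p <= z' ->
  \sum_(u in F') f u + \sum_(v in P) w v * (distS d v F') `^ p <=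
    4 * 16 `^ (p - 1) * lp_obj p d f w Fs P x y + (8 / 7) `^ (p - 1) * z'.
Proof.
move=> p1 dm f0 w0 hm hfeas hopt _ us hs _ iF F'n0 hz.
have F'Fs : F' \subset Fs by case: hm => h _; exact: h.
set Rv := Rad p d Fs x.
have Rv0 : forall v, 0 <= Rv v by move=> v; exact: powR_ge0.
have hJ := @cons_J R V p P Fs F' d w Rv p1 dm F'Fs F'n0 Rv0 s w us (fun v => ltac:(by rewrite hs)) (@init_J R V p P F' d w Rv w0 s).
have hfin := @final_J R V p P F' d w Rv p1 _ hJ.
have a1 := @al_ge1 R p p1.
have C0 : 0 <= 4 * 16 `^ (p - 1) :> R by rewrite mulr_ge0 // powR_ge0.
have hf : 0 <= \sum_(u in F') f u.
  by apply: sumr_ge0 => u uF; apply: f0; exact: (subsetP F'Fs).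
case: hfeas => [hx1 [hy hxy]].
have hfy : 0 <= \sum_(u in Fs) f u * y u.
  have [/set0Pn [v0 v0P]|/negPn/eqP P0] := boolP (P != set0).
    apply: sumr_ge0 => u uF; rewrite mulr_ge0 ?f0 //.
    by case: (hxy v0 u v0P uF) => h1 h2; apply: le_trans h2.
  have feas' : lp_feasible indep Fs P x (fun u => y u - 1).
    split; [|split].
    - by move=> v; rewrite P0 inE.
    - move=> S SFs; apply: le_trans (hy S SFs); apply: ler_sum => u _; lra.
    - by move=> v u; rewrite P0 inE.
  have := hopt _ _ feas'; rewrite /lp_obj lerD2r.
  under [X in _ <= X]eq_bigr do rewrite mulrBr mulr1.
  rewrite sumrB -[X in X <= _]subr0 lerD2l lerN2 => hf0.
  have fz : forall u, u \in Fs -> f u = 0.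
    apply: psumr_eq0P => //; apply/eqP; rewrite eq_le hf0 /=; exact: sumr_ge0.
  by rewrite big1 // => u uF; rewrite fz // mul0r.
have hl : \sum_(v in P) w v * Rv v `^ p <= lp_obj p d f w Fs P x y.
  rewrite /lp_obj -[X in X <= _]add0r lerD // le_eqVlt; apply/orP; left; apply/eqP.
  apply: eq_bigr => v vP; rewrite /Rv /Rad -powRrM mulVf ?powRr1; last first.
  - by apply/eqP; lra.
  - by apply: sumr_ge0 => u uF; rewrite mulr_ge0 ?powR_ge0 //; case: (hxy v u vP uF).
  by rewrite mulr_sumr; apply: eq_bigr => u _; rewrite mulrA.
move: hfin hz hl; set A := \sum_(v in P) w v * _; set B := \sum_(v in P) _ * _.
move=> hfin hz hl.
set al := (8 / 7) `^ (p - 1) in a1 hfin *; set C := 4 * 16 `^ (p - 1) in C0 hfin *.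
set Sf := \sum_(u in F') f u in hf hz *; set SR := \sum_(v in P) w v * Rv v `^ p in hfin hl.
set L := lp_obj _ _ _ _ _ _ _ _ in hl *.
have h1 : 0 <= (al - 1) * Sf by rewrite mulr_ge0 // subr_ge0.
have h2 : al * (Sf + B) <= al * z' by rewrite ler_wpM2l // (le_trans _ a1).
have h3 : C * SR <= C * L by rewrite ler_wpM2l.
nra.
Qed.
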